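(* For every block graph $G$, $\operatorname{cobox}(G)\le \operatorname{cothdim}(G)\le 2\operatorname{cobox}(G)$.
   Context: All graphs are finite and simple. A block is a maximal connected subgraph with no cut-vertex of its own; a block graph is a graph whose blocks are all complete. The co-boxicity $\operatorname{cobox}(G)$ is the boxicity of the complement of $G$; equivalently, the minimum number of co-interval subgraphs of $G$ whose edge sets have union $E(G)$, where a graph is co-interval if its vertices can be assigned closed real intervals such that two vertices are adjacent iff their intervals are disjoint. A threshold graph is a graph obtainable from a single vertex by repeatedly adding an isolated or a universal vertex. The threshold co-dimension $\operatorname{cothdim}(G)$ is the minimum number of threshold subgraphs of $G$ whose edge sets have union $E(G)$. *)

(* Defs.v *)
From Stdlib Require Import Reals.
From mathcomp Require Import all_boot.
Set Implicit Arguments. Unset Strict Implicit. Unset Printing Implicit Defensive.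

Definition simple_graph (T : finType) (e : rel T) : Prop :=
  symmetric e /\ irreflexive e.

Definition connected_on (T : finType) (e : rel T) (A : {set T}) : Prop :=
  forall x y, x \in A -> y \in A ->
    connect [rel u v | [&& e u v, u \in A & v \in A]] x y.

Definition biconnected_set (T : finType) (e : rel T) (B : {set T}) : Prop :=
  B != set0 /\ connected_on e B /\ forall v, v \in B -> connected_on e (B :\ v).

(* A block: a maximal connected subgraph with no cut-vertex
   (maximal subgraphs of this kind are induced, so we use vertex sets). *)
Definition is_block (T : finType) (e : rel T) (B : {set T}) : Prop :=
  biconnected_set e B /\
  forall B' : {set T}, B \proper B' -> ~ biconnected_set e B'.

Definition block_graph (T : finType) (e : rel T) : Prop :=
  simple_graph e /\
  forall B, is_block e B -> forall x y, x \in B -> y \in B -> x != y -> e x y.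

Definition subgraph_of (T : finType) (e : rel T) (S : {set T}) (h : rel T) : Prop :=
  symmetric h /\ forall x y, h x y -> [/\ x \in S, y \in S & e x y].

Definition cointerval (T : finType) (S : {set T}) (h : rel T) : Prop :=
  exists l r : T -> R,
    (forall x, x \in S -> Rle (l x) (r x)) /\
    forall x y, x \in S -> y \in S -> x != y ->
      (h x y <-> (Rlt (r x) (l y) \/ Rlt (r y) (l x))).

(* Threshold graph: obtained from a single vertex by repeatedly adding an
   isolated (b = false) or universal (b = true) vertex; s lists the vertices
   in order of addition. *)
Definition threshold (T : finType) (S : {set T}) (h : rel T) : Prop :=
  exists (s : seq T) (b : T -> bool),
    [/\ s != [::], uniq s, (forall x, (x \in s) = (x \in S)) &
        forall x y, x \in S -> y \in S -> x != y ->
          (h x y <-> (if index x s < index y s then b y else b x))].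

Definition edge_cover (T : finType) (e : rel T)
    (P : {set T} -> rel T -> Prop) (k : nat) : Prop :=
  exists (S : 'I_k -> {set T}) (h : 'I_k -> rel T),
    [/\ forall i, subgraph_of e (S i) (h i),
        forall i, P (S i) (h i) &
        forall x y, e x y <-> exists i, h i x y].

Definition is_min_cover (T : finType) (e : rel T)
    (P : {set T} -> rel T -> Prop) (k : nat) : Prop :=
  edge_cover e P k /\ forall k', edge_cover e P k' -> k <= k'.

Definition is_cobox (T : finType) (e : rel T) (k : nat) : Prop :=
  is_min_cover e (@cointerval T) k.
Definition is_cothdim (T : finType) (e : rel T) (k : nat) : Prop :=
  is_min_cover e (@threshold T) k.

(* Main.v *)
Require Import Defs.
From mathcomp Require Import all_boot.
From mathcomp Require Import zify.
From Stdlib Require Import Reals Lra Classical ClassicalEpsilon.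
Set Implicit Arguments. Unset Strict Implicit. Unset Printing Implicit Defensive.

Section G.
Variable T : finType.
Variable e : rel T.

Lemma conn_from (A : {set T}) z : symmetric e -> z \in A ->
  (forall x, x \in A -> connect [rel u v | [&& e u v, u \in A & v \in A]] z x) ->
  connected_on e A.
Proof.
move=> se zA H x y xA yA.
have sR : connect_sym [rel u v | [&& e u v, u \in A & v \in A]].
  apply: sym_connect_sym => u v /=; rewrite se; by case: (u \in A); case: (v \in A); rewrite ?andbF.
apply: (connect_trans (y:=z)); last exact: H.
by rewrite sR; apply: H.
Qed.

Lemma ext_block (B : {set T}) : biconnected_set e B -> exists B' : {set T}, B \subset B' /\ is_block e B'.
Proof.
suff: forall n (B : {set T}), #|T| - #|B| <= n -> biconnected_set e B -> exists B' : {set T}, B \subset B' /\ is_block e B'.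
  by move=> H; apply: (H #|T|); lia.
elim=> [|n IH] B0 Hn Hb;
  (case: (classic (exists B' : {set T}, B0 \proper B' /\ biconnected_set e B')) => [[B' [pB bB']]|nx];
   [ | by exists B0; split => //; split => // B' pB bB'; apply: nx; exists B']).
- have := proper_card pB; have := max_card B'; lia.
- have [B'' [s1 b1]] : exists B'' : {set T}, B' \subset B'' /\ is_block e B''.
    apply: (IH B') => //. have := proper_card pB; have := max_card B'; lia.
  exists B''; split => //. apply: subset_trans s1. by case/andP: pB.
Qed.

Lemma in4 (a b c d x : T) : x \in [set a; b; c; d] -> [\/ x = a, x = b, x = c | x = d].
Proof. by rewrite !inE => /orP [/orP [/orP [] | ] | ] /eqP ->; [constructor 1|constructor 2|constructor 3|constructor 4]. Qed.

Lemma four_cycle a b c d : block_graph e ->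
  a != b -> a != c -> a != d -> b != c -> b != d -> c != d ->
  e a b -> e b c -> e c d -> e d a -> e a c.
Proof.
move=> [[se ie] Hbg] nab nac nad nbc nbd ncd eab ebc ecd eda.
have fab : (a == b) = false by apply/negbTE.
have fac : (a == c) = false by apply/negbTE.
have fad : (a == d) = false by apply/negbTE.
have fbc : (b == c) = false by apply/negbTE.
have fbd : (b == d) = false by apply/negbTE.
have fcd : (c == d) = false by apply/negbTE.
have fba : (b == a) = false by rewrite eq_sym.
have fca : (c == a) = false by rewrite eq_sym.
have fda : (d == a) = false by rewrite eq_sym.
have fcb : (c == b) = false by rewrite eq_sym.
have fdb : (d == b) = false by rewrite eq_sym.
have fdc : (d == c) = false by rewrite eq_sym.
have eba : e b a by rewrite se.
have ecb : e c b by rewrite se.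
have edc : e d c by rewrite se.
have ead : e a d by rewrite se.
pose A := [set a; b; c; d].
have bic : biconnected_set e A.
  split; first by apply/set0Pn; exists a; rewrite !inE eqxx.
  split.
    apply: (conn_from (z:=a)) => //; first by rewrite !inE eqxx.
    move=> x /in4 [] ->; first by [].
    + by apply: connect1; rewrite /= !inE eab !eqxx /= ?orbT.
    + apply: (connect_trans (y:=b)); apply: connect1;
        by rewrite /= !inE ?eab ?ebc !eqxx /= ?orbT.
    + by apply: connect1; rewrite /= !inE ead !eqxx /= ?orbT.
  move=> v /in4 [] ->.
  + apply: (conn_from (z:=c)) => //; first by rewrite !inE fca fcd /= eqxx ?orbT.
    move=> x; rewrite in_setD1 => /andP [xv] /in4 [] ?; subst x; (try by rewrite eqxx in xv);
    (try exact: connect0); apply: connect1;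
      by rewrite /= !inE ?ecb ?ecd ?fca ?fcb ?fda ?fba ?fcd ?eqxx /= ?orbT.
  + apply: (conn_from (z:=d)) => //; first by rewrite !inE fdb eqxx ?orbT.
    move=> x; rewrite in_setD1 => /andP [xv] /in4 [] ?; subst x; (try by rewrite eqxx in xv);
    (try exact: connect0); apply: connect1;
      by rewrite /= !inE ?eda ?edc ?fdb ?fab ?fcb ?fad ?eqxx /= ?orbT.
  + apply: (conn_from (z:=a)) => //; first by rewrite !inE fac eqxx ?orbT.
    move=> x; rewrite in_setD1 => /andP [xv] /in4 [] ?; subst x; (try by rewrite eqxx in xv);
    (try exact: connect0); apply: connect1;
      by rewrite /= !inE ?eab ?ead ?fac ?fbc ?fdc ?eqxx /= ?orbT.
  + apply: (conn_from (z:=b)) => //; first by rewrite !inE fbd eqxx ?orbT.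
    move=> x; rewrite in_setD1 => /andP [xv] /in4 [] ?; subst x; (try by rewrite eqxx in xv);
    (try exact: connect0); apply: connect1;
      by rewrite /= !inE ?eba ?ebc ?fbd ?fad ?fcd ?eqxx /= ?orbT.
have [B [sAB bB]] := ext_block bic.
apply: (Hbg B bB) => //; apply: (subsetP sAB); by rewrite !inE eqxx ?orbT.
Qed.

End G.

Section G2.
Variable T : finType.
Variable e : rel T.

Definition NS (v : T) : {set T} := [set x | (x == v) || e v x].
Definition thr (v : T) (C : {set T}) : rel T := fun x y =>
  [&& x \in NS v, y \in NS v, e x y & [|| x == v, y == v | (x \in C) && (y \in C)]].

Lemma thr_e v C x y : thr v C x y -> e x y.
Proof. by case/and4P. Qed.

Lemma thr_ok (v : T) (C : {set T}) : simple_graph e -> (forall z, z \in C -> e v z) ->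
  (forall z w, z \in C -> w \in C -> z != w -> e z w) ->
  subgraph_of e (NS v) (thr v C) /\ threshold (NS v) (thr v C).
Proof.
move=> [se ie] CN Ccl.
have vC : v \notin C by apply/negP => /CN; rewrite ie.
split.
  split; last by move=> x y /and4P [].
  move=> x y; rewrite /thr se.
  by case: (x \in NS v); case: (y \in NS v); case: (e y x); case: (x == v); case: (y == v);
    case: (x \in C); case: (y \in C).
pose M := NS v :\: (v |: C).
pose s := enum C ++ enum M ++ [:: v].
pose b := fun x => (x \in C) || (x == v).
have vM : v \notin M by rewrite !inE eqxx.
have CM : forall x, x \in C -> x \notin M by move=> x xC; rewrite !inE xC orbT.
have MC : forall x, x \in M -> x \notin C by move=> x xM; apply/negP => /CM; rewrite xM.
have Mv : forall x, x \in M -> x != v by move=> x xM; apply/eqP => h; move: xM; rewrite h (negbTE vM).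
have iC : forall x, x \in C -> index x s < size (enum C).
  by move=> x xC; rewrite index_cat mem_enum xC index_mem mem_enum.
have iM : forall x, x \in M -> size (enum C) <= index x s < size (enum C) + size (enum M).
  move=> x xM; rewrite index_cat mem_enum (negbTE (MC x xM)) index_cat mem_enum xM.
  by rewrite leq_addr ltn_add2l index_mem mem_enum.
have iv : index v s = size (enum C) + size (enum M).
  rewrite index_cat mem_enum (negbTE vC) index_cat mem_enum (negbTE vM) /= eqxx; lia.
have NSv : v \in NS v by rewrite inE eqxx.
have cls : forall x, x \in NS v -> [\/ x \in C, x = v | x \in M].
  move=> x xN; case xC: (x \in C); first by constructor 1.
  case xv: (x == v); first by constructor 2; apply/eqP.
  by constructor 3; rewrite in_setD in_setU1 xv xC xN.
have MN : forall x, x \in M -> x \in NS v by move=> x; rewrite inE => /andP [].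
have CNS : forall x, x \in C -> x \in NS v by move=> x /CN ex; rewrite inE ex orbT.
have eNS : forall x, x \in NS v -> x != v -> e v x.
  by move=> x; rewrite inE => /orP [->|//].
exists s, b; split.
- apply/eqP => h; have : v \in s by rewrite !mem_cat inE eqxx !orbT.
  by rewrite h.
- rewrite !cat_uniq !enum_uniq /= andbT.
  apply/andP; split; last by rewrite mem_enum orbF.
  apply/hasPn => z; rewrite mem_cat mem_enum => /orP [zM|]; rewrite /= mem_enum; [exact: MC | by rewrite inE => /eqP ->].
- move=> x; rewrite !mem_cat !mem_enum mem_seq1; apply/idP/idP.
    case/orP => [xC|/orP [xM|/eqP ->]]; [exact: CNS | exact: MN | done].
  by case/cls => [->|->|->]; rewrite ?eqxx ?orbT.
move=> x y xN yN xy.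
rewrite /thr xN yN /=.
match goal with |- is_true ?A <-> is_true ?B => suff ->: A = B by [] end.
case/cls: xN => [xC|xv|xM]; case/cls: yN => [yC|yv|yM].
- by rewrite /b xC yC /= Ccl ?if_same ?orbT.
- by subst y; rewrite /b xC eqxx /= !orbT se CN // if_same.
- have := iC x xC; have := iM y yM => i1 i2.
  have -> : index x s < index y s by lia.
  have xv : (x == v) = false by apply/eqP => h; move: xC; rewrite h (negbTE vC).
  by rewrite /b xv (negbTE (MC y yM)) (negbTE (Mv y yM)) /= !andbF.
- by subst x; rewrite /b yC eqxx /= !orbT CN // if_same.
- by subst x y; rewrite eqxx in xy.
- subst x; have := iM y yM => i1.
  have -> : (index v s < index y s) = false by lia.
  by rewrite /b eqxx orbT /= eNS // ?MN // Mv.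
- have := iC y yC; have := iM x xM => i1 i2.
  have -> : (index x s < index y s) = false by lia.
  have yv : (y == v) = false by apply/eqP => h; move: yC; rewrite h (negbTE vC).
  by rewrite /b yv (negbTE (MC x xM)) (negbTE (Mv x xM)) /= !andbF.
- subst y; have := iM x xM => i1.
  have -> : (index x s < index v s) by lia.
  by rewrite /b eqxx orbT /= se orbT andbT eNS ?MN ?Mv.
- rewrite /b (negbTE (MC x xM)) (negbTE (Mv x xM)) (negbTE (MC y yM)) (negbTE (Mv y yM)) /= andbF.
  by case: ifP.
Qed.
End G2.

Definition LL (i : nat) (b : bool) : R := if b then (2 * INR i + 1)%R else (- (2 * INR i))%R.
Definition RR (i : nat) (b : bool) : R := if b then (2 * INR i + 1)%R else (2 * INR i)%R.

Lemma LR_key i j (bx by' : bool) : i < j ->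
  (by' = true <-> (Rlt (RR i bx) (LL j by') \/ Rlt (RR j by') (LL i bx))).
Proof.
move=> ij.
have h0 := pos_INR i.
have h1 : (INR i + 1 <= INR j)%R.
  rewrite -S_INR; apply: le_INR; exact/leP.
rewrite /LL /RR; case: bx; case: by'; split => //; try lra; move=> H; exfalso; lra.
Qed.

Lemma LR_le i b : Rle (LL i b) (RR i b).
Proof. have := pos_INR i; rewrite /LL /RR; case: b; lra. Qed.

Lemma thr_coint (T : finType) (S : {set T}) (h : rel T) : threshold S h -> cointerval S h.
Proof.
move=> [s [b [_ us ms H]]].
exists (fun x => LL (index x s) (b x)), (fun x => RR (index x s) (b x)); split.
  by move=> x _; apply: LR_le.
move=> x y xS yS xy; rewrite (H x y xS yS xy).
have xs : x \in s by rewrite ms.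
have ys : y \in s by rewrite ms.
case: (ltngtP (index x s) (index y s)) => ij.
- exact: LR_key.
- move: (LR_key (b y) (b x) ij); rewrite /is_true; tauto.
- exfalso; move/eqP: xy; apply.
  by rewrite -(nth_index x xs) -(nth_index x ys) ij.
Qed.

Lemma argmin (T : eqType) (f : T -> R) (s : seq T) : s != [::] ->
  exists p, p \in s /\ forall z, z \in s -> Rle (f p) (f z).
Proof.
elim: s => [//|x s IH] _.
case: (s =P [::]) => [->|/eqP ns].
  by exists x; split; rewrite ?inE ?eqxx // => z; rewrite inE => /eqP ->; apply: Rle_refl.
have [p [ps pm]] := IH ns.
case: (Rle_dec (f x) (f p)) => hx.
  exists x; split; first by rewrite inE eqxx.
  move=> z; rewrite inE => /orP [/eqP ->|zs]; first exact: Rle_refl.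
  apply: Rle_trans hx (pm z zs).
exists p; split; first by rewrite inE ps orbT.
move=> z; rewrite inE => /orP [/eqP ->|zs]; last exact: pm.
apply: Rlt_le; apply: Rnot_le_lt hx.
Qed.

Section Main.
Variable T : finType.
Variable e : rel T.

Definition Cs (p q : T) : {set T} := [set z | [&& e p q, e p z & (z == q) || e q z]].

Lemma thr_sym v C : symmetric e -> symmetric (thr e v C).
Proof.
move=> se x y; rewrite /thr se.
by case: (x \in NS e v); case: (y \in NS e v); case: (e y x); case: (x == v); case: (y == v);
  case: (x \in C); case: (y \in C).
Qed.

Lemma Cs_ok p q : block_graph e ->
  (forall z, z \in Cs p q -> e p z) /\
  (forall z w, z \in Cs p q -> w \in Cs p q -> z != w -> e z w).
Proof.
move=> bg; have [[se ie] _] := bg.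
split; first by move=> z; rewrite inE => /and3P [].
move=> z w; rewrite !inE => /and3P [epq epz zq] /and3P [_ epw wq] zw.
have pq : p != q by apply/eqP => h; move: epq; rewrite h ie.
have pz : p != z by apply/eqP => h; move: epz; rewrite h ie.
have pw : p != w by apply/eqP => h; move: epw; rewrite h ie.
case: (z =P q) zq => [hz _|/eqP nzq /= eqz].
  subst z; case: (w =P q) wq => [h _|_ //]; by rewrite h eqxx in zw.
case: (w =P q) wq => [hw _|/eqP nwq /= eqw]; first by subst w; rewrite se.
have zp : z != p by rewrite eq_sym.
have ezp : e z p by rewrite se.
have ewq : e w q by rewrite se.
exact: (@four_cycle T e z p w q bg zp zw nzq pw pq nwq ezp epw ewq eqz).
Qed.


Lemma cover2 (S : {set T}) (h : rel T) (x0 : T) : block_graph e -> subgraph_of e S h ->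
  cointerval S h ->
  exists pq : T * T, forall x y, h x y ->
    thr e pq.1 (Cs pq.1 pq.2) x y \/ thr e pq.2 set0 x y.
Proof.
move=> bg [hs hsub] [l [r [lr Hlr]]]; have [[se ie] _] := bg.
case: (enum S =P [::]) => [E|/eqP nE].
  exists (x0, x0) => x y /hsub [xS _ _]; exfalso.
  by move: xS; rewrite -mem_enum E.
have [p [pS pm]] := argmin r nE.
have [q [qS qm]] := argmin (fun z => - l z)%R nE.
rewrite mem_enum in pS; rewrite mem_enum in qS.
have pm' : forall z, z \in S -> Rle (r p) (r z) by move=> z zS; apply: pm; rewrite mem_enum.
have qm' : forall z, z \in S -> Rle (l z) (l q).
  by move=> z zS; have := qm z; rewrite mem_enum => /(_ zS); lra.
exists (p, q) => /=.
suff core : forall x y, h x y -> Rlt (r x) (l y) ->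
    thr e p (Cs p q) x y \/ thr e q set0 x y.
  move=> x y hxy; have [xS yS exy] := hsub x y hxy.
  have xy : x != y by apply/eqP => E; move: exy; rewrite E ie.
  case: (proj1 (Hlr x y xS yS xy) hxy) => H; first exact: core.
  rewrite (thr_sym _ _ se x y) (thr_sym _ _ se x y); apply: core => //; by rewrite hs.
move=> x y hxy rxy; have [xS yS exy] := hsub x y hxy.
have lrx := lr x xS; have lry := lr y yS; have lrp := lr p pS; have lrq := lr q qS.
have rpx := pm' x xS; have lyq := qm' y yS.
have py : p != y by apply/eqP => E; subst y; lra.
have epy : e p y.
  have hpy : h p y by apply/(Hlr p y pS yS py); left; lra.
  by have [] := hsub p y hpy.
have qx : q != x by apply/eqP => E; subst x; lra.
have exq : e x q.
  have xq : x != q by rewrite eq_sym.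
  have hxq : h x q by apply/(Hlr x q xS qS xq); left; lra.
  by have [] := hsub x q hxq.
have xy : x != y by apply/eqP => E; move: exy; rewrite E ie.
case: (x =P p) => [E|/eqP xp].
  left; subst x; by rewrite /thr !inE eqxx ?epy ?exy ?orbT.
case: (y =P q) => [E|/eqP yq].
  right; subst y; have eqx : e q x by rewrite se.
  by rewrite /thr !inE eqxx ?eqx ?exy ?orbT.
have pq : p != q by apply/eqP => E; subst q; lra.
have epq : e p q.
  have hpq : h p q by apply/(Hlr p q pS qS pq); left; lra.
  by have [] := hsub p q hpq.
have epx : e p x.
  have yx : y != x by rewrite eq_sym.
  have px : p != x by rewrite eq_sym.
  have xq : x != q by rewrite eq_sym.
  have eyx : e y x by rewrite se.
  have eqp : e q p by rewrite se.
  exact: (@four_cycle T e p y x q bg py px pq yx yq xq epy eyx exq eqp).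
have eyq : e y q.
  have yx : y != x by rewrite eq_sym.
  have yp : y != p by rewrite eq_sym.
  have xq : x != q by rewrite eq_sym.
  have eyx : e y x by rewrite se.
  have eqp : e q p by rewrite se.
  have qp : q != p by rewrite eq_sym.
  exact: (@four_cycle T e y x q p bg yx yq yp xq xp qp eyx exq eqp epy).
left; rewrite /thr !inE epx epy exy epq /= se exq se eyq /= ?orbT.
by [] . 
Qed.

End Main.

Theorem proposition15 (T : finType) (e : rel T) (a b : nat) :
  block_graph e -> is_cobox e a -> is_cothdim e b ->
  a <= b <= 2 * a.
Proof.
move=> bg [[Sa [ha [a1 a2 a3]]] amin] [[Sb [hb [b1 b2 b3]]] bmin].
have sg : simple_graph e by case: bg.
apply/andP; split.
  apply: amin; exists Sb, hb; split => // i; exact: thr_coint.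
case: (pickP (fun _ : T => true)) => [x0 _|none].
  have H : forall j : 'I_a, exists pq : T * T, forall x y, ha j x y ->
      thr e pq.1 (Cs e pq.1 pq.2) x y \/ thr e pq.2 set0 x y.
    move=> j; exact: cover2 x0 bg (a1 j) (a2 j).
  pose f j := proj1_sig (constructive_indefinite_description _ (H j)).
  have fP : forall j x y, ha j x y ->
      thr e (f j).1 (Cs e (f j).1 (f j).2) x y \/ thr e (f j).2 set0 x y.
    move=> j; exact: (proj2_sig (constructive_indefinite_description _ (H j))).
  have -> : 2 * a = a + a by rewrite mul2n addnn.
  apply: bmin.
  exists (fun i : 'I_(a + a) => match fintype.split i with inl j => NS e (f j).1 | inr j => NS e (f j).2 end).
  exists (fun i : 'I_(a + a) => match fintype.split i with
             inl j => thr e (f j).1 (Cs e (f j).1 (f j).2) | inr j => thr e (f j).2 set0 end).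
  have okL : forall j : 'I_a, subgraph_of e (NS e (f j).1) (thr e (f j).1 (Cs e (f j).1 (f j).2)) /\
      threshold (NS e (f j).1) (thr e (f j).1 (Cs e (f j).1 (f j).2)).
    move=> j; have [c1 c2] := Cs_ok (f j).1 (f j).2 bg; exact: thr_ok.
  have okR : forall j : 'I_a, subgraph_of e (NS e (f j).2) (thr e (f j).2 set0) /\
      threshold (NS e (f j).2) (thr e (f j).2 set0).
    by move=> j; apply: thr_ok => // z; rewrite inE.
  split.
  - by move=> i; case: (fintype.split i) => j; [case: (okL j) | case: (okR j)].
  - by move=> i; case: (fintype.split i) => j; [case: (okL j) | case: (okR j)].
  - move=> x y; split.
      move=> /a3 [j /fP [H1|H1]].
        by exists (unsplit (inl j)); rewrite unsplitK.
      by exists (unsplit (inr j)); rewrite unsplitK.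
    by move=> [i]; case: (fintype.split i) => j; apply: thr_e.
apply: leq_trans (bmin 0 _) _ => //.
exists (fun _ => set0), (fun _ => fun _ _ => false); split.
- by case.
- by case.
- by move=> x y; have := none x.
Qed.
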